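(* Let $\nu$ be a signature and let $\mathcal A\in\widetilde{\mathrm{Hinge}}_n$ be a nondegenerate element lying over the canonical hinge $\mathcal P_{\alpha_1,\dots,\alpha_k}$. Then $\rho_\nu(\mathcal A)\Xi_\nu=c\,\Xi_\nu$ for some $c\in\mathbb C^*$.
   Context: Let $V=\mathbb C^n$ with basis $e_1,\dots,e_n$. A linear relation is a subspace $P\subset V\oplus V$; $\mathrm{Ker}\,P=\{v: v\oplus0\in P\}$, $\mathrm{Dom}\,P,\mathrm{Im}\,P$ the projections to the first and second summands, $\mathrm{Indef}\,P=\{w:0\oplus w\in P\}$, $\mathrm{rk}\,P=\dim\mathrm{Dom}\,P-\dim\mathrm{Ker}\,P$. If $\dim P=n$, choose bases $f_1,\dots,f_a,g_1,\dots,g_b,h_1,\dots,h_c$ and $F_1,\dots,F_a,G_1,\dots,G_b,H_1,\dots,H_c$ of $V$ with $P$ spanned by $0\oplus F_i$, $g_j\oplus G_j$, $h_k\oplus0$; $\lambda(P)$ maps $f_1\wedge\dots\wedge f_a\wedge g_{i_1}\wedge\dots\wedge g_{i_s}$ to $F_1\wedge\dots\wedge F_a\wedge G_{i_1}\wedge\dots\wedge G_{i_s}$ and kills the other basis monomials (up to scalar); $\lambda^m(P)$ its restriction to $\Lambda^mV$. A hinge is a sequence $\mathcal P=(P_1,\dots,P_k)$ of $n$-dimensional relations with $\mathrm{Ker}\,P_j=\mathrm{Dom}\,P_{j+1}$, $\mathrm{Im}\,P_j=\mathrm{Indef}\,P_{j+1}$, $\mathrm{Dom}\,P_1=V$, $\mathrm{Im}\,P_k=V$,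 $\mathrm{rk}\,P_j>0$. For each $m$ there is a nonzero $\lambda^m(P_j)$, and any two nonzero ones are proportional; $\lambda^m(\mathcal P)$ denotes it (up to scalar). $\mathcal A$ lies over $\mathcal P$ if $\mathcal A=(c_0\lambda^0(\mathcal P),\dots,c_n\lambda^n(\mathcal P))$ with $c_j\in\mathbb C$; it is nondegenerate if all $c_j\ne0$; $\widetilde{\mathrm{Hinge}}_n$ is the set of all such tuples. For positive integers $\alpha_1,\dots,\alpha_k$ with sum $n$, the canonical hinge $\mathcal P_{\alpha_1,\dots,\alpha_k}=(P_1,\dots,P_k)$ has $P_j$ spanned by $0\oplus e_\sigma$ for $\sigma\le\alpha_1+\dots+\alpha_{j-1}$, by $e_t\oplus e_t$ for $\alpha_1+\dots+\alpha_{j-1}<t\le\alpha_1+\dots+\alpha_j$, and by $e_\mu\oplus0$ for $\mu>\alpha_1+\dots+\alpha_j$. A signature is $\nu_1\ge\dots\ge\nu_n\ge0$ (integers), $\nu_{n+1}=0$; $\mathfrak H_\nu=\bigotimes_j(\Lambda^jV)^{\otimes(\nu_j-\nu_{j+1})}$; $\Xi_\nu=\bigotimes_j(e_1\wedge\dots\wedge e_j)^{\otimes(\nu_j-\nu_{j+1})}$; $\mathfrak r_\nu(A_0,\dots,A_n)=\bigotimes_jA_j^{\otimes(\nu_j-\nu_{j+1})}$; $H_\nu$ is the span of $\mathfrak r_\nu(\lambda^0_{\mathrm{cha}}(g),\dots,\lambda^n_{\mathrm{cha}}(g))\Xi_\nu$, $g\in\mathrm{GL}_n(\mathbb C)$,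 where $\lambda^j_{\mathrm{cha}}(g)v_1\wedge\dots\wedge v_j=gv_1\wedge\dots\wedge gv_j$; $H_\nu$ is invariant under $\mathfrak r_\nu(\mathcal A)$ for $\mathcal A\in\widetilde{\mathrm{Hinge}}_n$, and $\rho_\nu(\mathcal A)$ is the restriction of $\mathfrak r_\nu(\mathcal A)$ to $H_\nu$. *)

(* Defs.v *)
From HB Require Import structures.
From mathcomp Require Import all_boot all_order all_algebra.
From mathcomp Require Import complex.
Set Implicit Arguments. Unset Strict Implicit. Unset Printing Implicit Defensive.
Import Order.TTheory GRing.Theory Num.Theory.
Local Open Scope ring_scope.

(* Conventions:
   - V = C^n with basis e_0..e_{n-1} (0-indexed version of e_1..e_n).
   - The exterior algebra Lambda V is identified with functions
     {set 'I_n} -> C : the coordinate at S is the coefficient of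
     e_{s_1} /\ ... /\ e_{s_k} with s_1 < ... < s_k the elements of S.
     Lambda^m V = the functions supported on sets of size m.
   - An operator on Lambda V (or Lambda^m V) is given by its kernel
     (matrix) K : {set 'I_n} -> {set 'I_n} -> C.
   - A linear relation P in V (+) V is the row space (mxalgebra) of a
     matrix with rows in 'rV_(n + n); the row  row_mx v w  encodes v (+) w. *)

Section Defs.
Variable C : fieldType.
Variable n : nat.

Definition extvec := {set 'I_n} -> C.
Definition extop := {set 'I_n} -> {set 'I_n} -> C.

Definition apply_op (K : extop) (v : extvec) : extvec :=
  fun S => \sum_(T : {set 'I_n}) K S T * v T.

(* wedge of the rows of B indexed by T (in increasing order):
   coordinate at S is the minor of B with rows T and columns S. *)
Definition wedge_rows (B : 'M[C]_n) (T : {set 'I_n}) : extvec :=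
  fun S => if #|S| == #|T| then
     \det (\matrix_(i < #|T|, j < #|T|)
             nth 0 (nth [::] [seq [seq B r c | c <- enum S] | r <- enum T] i) j)
   else 0.

(* lambda(P) for an n-dimensional relation P, for a choice of bases:
   rows 0..a-1 of B are f_1..f_a, rows a..a+b-1 are g_1..g_b,
   rows a+b..n-1 are h_1..h_c; similarly B' carries F, G, H.
   P is spanned by 0(+)F_i, g_j(+)G_j, h_k(+)0. *)
Definition rel_of_bases (a b : nat) (B B' : 'M[C]_n) : 'M[C]_(n, n + n) :=
  \matrix_(i < n) row_mx (if (a <= i)%N then row i B else 0)
                         (if (i < a + b)%N then row i B' else 0).

Definition is_lambda (P : 'M[C]_(n, n + n)) (L : extop) : Prop :=
  exists (a b c : nat) (B B' : 'M[C]_n),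
    [/\ (a + b + c)%N = n, B \in unitmx, B' \in unitmx,
        (P == rel_of_bases a b B B')%MS &
        forall T : {set 'I_n},
          apply_op L (wedge_rows B T) =
          if [forall i : 'I_n, ((i < a)%N ==> (i \in T)) && ((i \in T) ==> (i < a + b)%N)]
          then wedge_rows B' T else (fun _ => 0)].

Definition restr (m : nat) (L : extop) : extop :=
  fun S T => if (#|S| == m) && (#|T| == m) then L S T else 0.

(* A = (A_0, ..., A_n) is a nondegenerate element of tilde Hinge_n lying over
   the hinge Ps: A_m = c_m lambda^m(Ps) with c_m <> 0, where lambda^m(Ps) is
   a nonzero lambda^m(P_j) (for some admissible choice of bases). *)
Definition nondeg_over (Ps : seq 'M[C]_(n, n + n)) (A : nat -> extop) : Prop :=
  forall m, (m <= n)%N ->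
    exists j L, [/\ (j < size Ps)%N, is_lambda (nth 0 Ps j) L,
                    (exists S T, restr m L S T != 0) &
                    exists2 c : C, c != 0 &
                      forall S T, A m S T = c * restr m L S T].

Definition canon_rel (lo hi : nat) : 'M[C]_(n, n + n) :=
  \matrix_(i < n) row_mx (if (lo <= i)%N then delta_mx 0 i else 0)
                         (if (i < hi)%N then delta_mx 0 i else 0).

Definition canon_hinge (alpha : seq nat) : seq 'M[C]_(n, n + n) :=
  [seq canon_rel (sumn (take j alpha)) (sumn (take j.+1 alpha))
     | j <- iota 0 (size alpha)].

(* signature nu = (nu_1, ..., nu_n) stored as a seq; nu_{n+1} = 0 *)
Definition signature (nu : seq nat) : Prop :=
  size nu = n /\ sorted geq nu.

(* degrees of the tensor factors of H_nu = (x)_j (Lambda^j V)^(nu_j - nu_{j+1}) *)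
Definition degs (nu : seq nat) : seq nat :=
  flatten [seq nseq (nth 0 nu j.-1 - nth 0 nu j) j | j <- iota 1 n].

Definition tens (N : nat) := N.-tuple {set 'I_n} -> C.

Definition xi_deg (j : nat) : extvec :=
  fun S => if S == [set i : 'I_n | (i < j)%N] then 1 else 0.

Definition Xi (nu : seq nat) : tens (size (degs nu)) :=
  fun S => \prod_(i < size (degs nu)) xi_deg (nth 0 (degs nu) i) (tnth S i).

(* r_nu(A_0..A_n) = (x)_j A_j^{(x)(nu_j - nu_{j+1})}, applied to a tensor *)
Definition r_nu (nu : seq nat) (A : nat -> extop) (t : tens (size (degs nu)))
  : tens (size (degs nu)) :=
  fun S => \sum_(T : (size (degs nu)).-tuple {set 'I_n})
             (\prod_(i < size (degs nu)) A (nth 0 (degs nu) i) (tnth S i) (tnth T i))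
             * t T.

End Defs.

(* Main.v *)
Require Import Defs.
From HB Require Import structures.
From mathcomp Require Import all_boot all_order all_algebra.
From mathcomp Require Import complex.
From mathcomp Require Import fingroup perm.
Set Implicit Arguments. Unset Strict Implicit. Unset Printing Implicit Defensive.
Import GRing.Theory Num.Theory.
Local Open Scope ring_scope.

Section CB.
Variable C : fieldType.
Variable n : nat.
Variable x0 : 'I_n.

Definition ev (T : {set 'I_n}) (j : nat) : 'I_n := nth x0 (enum T) j.

Lemma ev_mem (T : {set 'I_n}) j : (j < #|T|)%N -> ev T j \in T.
Proof. by move=> hj; rewrite -mem_enum /ev mem_nth // -cardE. Qed.

Lemma ev_inj (T : {set 'I_n}) i j : (i < #|T|)%N -> (j < #|T|)%N -> ev T i = ev T j -> i = j.
Proof.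
move=> hi hj; rewrite /ev => /eqP; rewrite nth_uniq ?enum_uniq -?cardE //.
by move/eqP.
Qed.

Lemma ev_index (T : {set 'I_n}) t : t \in T -> ev T (index t (enum T)) = t.
Proof. by move=> ht; rewrite /ev nth_index // mem_enum. Qed.

Lemma index_lt (T : {set 'I_n}) t : t \in T -> (index t (enum T) < #|T|)%N.
Proof. by move=> ht; rewrite cardE index_mem mem_enum. Qed.

Lemma CB k (A : 'M[C]_(k,n)) (B : 'M[C]_(n,k)) :
  \det (A *m B) = \sum_(T : {set 'I_n} | #|T| == k)
     \det (\matrix_(i < k, j < k) A i (ev T j)) *
     \det (\matrix_(i < k, j < k) B (ev T i) j).
Proof.
pose F := {ffun 'I_k -> 'I_n}.
pose G (f : F) := (\prod_i A i (f i)) * \det (\matrix_(i < k, j < k) B (f i) j).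
have E1 : \det (A *m B) = \sum_(f : F) G f.
  rewrite /G /determinant.
  rewrite (eq_bigr (fun s : 'S_k => \sum_(f : F) (-1) ^+ s *
             \prod_i (A i (f i) * B (f i) (s i)))); last first.
    move=> s _; rewrite -big_distrr /=; congr (_ * _).
    rewrite -(bigA_distr_bigA (fun i l => A i l * B l (s i))).
    by apply: eq_bigr => i _; rewrite mxE.
  rewrite exchange_big; apply: eq_bigr => f _; rewrite big_distrr.
  apply: eq_bigr => s _; rewrite big_split /= mulrCA; congr (_ * (_ * _)).
  by apply: eq_bigr => i _; rewrite mxE.
have E2 : forall f : F, ~~ injectiveb f -> G f = 0.
  move=> f /injectivePn [i1 [i2 Di12 Ef12]]; rewrite /G.
  by rewrite (determinant_alternate Di12) ?mulr0 // => j; rewrite !mxE Ef12.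
rewrite E1 (bigID (fun f : F => injectiveb f)) /= [X in _ + X]big1 ?addr0; last first.
  by move=> f hf; apply: E2.
rewrite (partition_big (fun f : F => [set f i | i : 'I_k]) predT) //=.
rewrite (bigID (fun T : {set 'I_n} => #|T| == k)) /= [X in _ + X]big1 ?addr0; last first.
  move=> T hT; apply: big1 => f /andP [/injectiveP hf /eqP hT'].
  by move: hT; rewrite -hT' card_imset // card_ord eqxx.
apply: eq_bigr => T /eqP hT.
pose h (s : 'S_k) : F := [ffun i => ev T (s i)].
have hinj : injective h.
  move=> s1 s2 /ffunP E; apply/permP => i; move: (E i); rewrite !ffunE.
  by move/ev_inj; rewrite hT => H; apply/val_inj/H.
transitivity (\sum_(f in h @: setT) G f).
  apply: eq_bigl => f; apply/idP/idP.
    case/andP => /injectiveP finj /eqP fimg.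
    have fT : forall i, f i \in T by move=> i; rewrite -fimg; apply: imset_f.
    have gP : forall i, (index (f i) (enum T) < k)%N.
      by move=> i; have := index_lt (fT i); rewrite hT.
    pose g i := Ordinal (gP i).
    have ginj : injective g.
      move=> i1 i2 /(congr1 val) /= E; apply: finj.
      by rewrite -(ev_index (fT i1)) E ev_index.
    apply/imsetP; exists (perm ginj) => //; apply/ffunP => i.
    by rewrite ffunE permE /= ev_index.
  case/imsetP => s _ ->; apply/andP; split.
    by apply/injectiveP => i1 i2; rewrite !ffunE => /ev_inj; rewrite hT => H;
      apply: (perm_inj (s := s)); apply/val_inj/H.
  apply/eqP/setP => t; apply/imsetP/idP.
    by case=> i _ ->; rewrite ffunE ev_mem // hT.
  move=> tT; have jP := index_lt tT; rewrite hT in jP.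
  exists (s^-1 (Ordinal jP))%g => //; rewrite ffunE permKV /=.
  by rewrite ev_index.
rewrite big_imset /=; last by move=> s1 s2 _ _; apply: hinj.
rewrite /determinant big_distrl /=.
rewrite (eq_bigl predT) //; last by move=> s; rewrite in_setT.
apply: eq_bigr => s _; rewrite /G.
have -> : (\matrix_(i < k, j < k) B (h s i) j) =
          row_perm s (\matrix_(i < k, j < k) B (ev T i) j).
  by apply/matrixP => i j; rewrite !mxE ffunE.
rewrite row_permE det_mulmx det_perm /determinant.
rewrite mulrA; congr (_ * _); rewrite mulrC; congr (_ * _).
by apply: eq_bigr => i _; rewrite mxE ffunE.
Qed.


Definition mxs p q (M : 'M[C]_n) (s t : seq 'I_n) : 'M[C]_(p,q) :=
  \matrix_(i < p, j < q) M (nth x0 s i) (nth x0 t j).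

Lemma wedgeE (M : 'M[C]_n) (T S : {set 'I_n}) : wedge_rows M T S =
  if #|S| == #|T| then \det (mxs #|T| #|T| M (enum T) (enum S)) else 0.
Proof.
rewrite /wedge_rows; case: eqP => // hST; congr (\det _); apply/matrixP => i j.
rewrite !mxE (nth_map x0) -?cardE // (nth_map x0) // -cardE hST //.
Qed.

Lemma minorCB (M N : 'M[C]_n) (U S : {set 'I_n}) : #|U| = #|S| ->
  \sum_(T : {set 'I_n}) wedge_rows M U T * wedge_rows N T S = wedge_rows (M *m N) U S.
Proof.
move=> hUS; rewrite [RHS]wedgeE hUS eqxx.
have -> : mxs #|S| #|S| (M *m N) (enum U) (enum S) =
   (\matrix_(i < #|S|, l < n) M (nth x0 (enum U) i) l) *m
   (\matrix_(l < n, j < #|S|) N l (nth x0 (enum S) j)).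
  by apply/matrixP => i j; rewrite !mxE; apply: eq_bigr => l _; rewrite !mxE.
rewrite CB (bigID (fun T : {set 'I_n} => #|T| == #|S|)) /= [X in _ + X]big1 ?addr0.
  apply: eq_bigr => T /eqP hT; rewrite !wedgeE hT hUS eqxx.
  by congr (_ * _); congr (\det _); apply/matrixP => i j; rewrite !mxE.
by move=> T hT; rewrite wedgeE hUS (negbTE hT) mul0r.
Qed.

Lemma det_zero_row k (A : 'M[C]_k) i : (forall j, A i j = 0) -> \det A = 0.
Proof. by move=> H; rewrite (expand_det_row _ i) big1 // => j _; rewrite H mul0r. Qed.

Lemma det_zero_col k (A : 'M[C]_k) j : (forall i, A i j = 0) -> \det A = 0.
Proof. by move=> H; rewrite -det_tr (det_zero_row (i := j)) // => i; rewrite mxE. Qed.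

Lemma minor1 (U S : {set 'I_n}) : #|U| = #|S| -> wedge_rows (1%:M : 'M[C]_n) U S = (U == S)%:R.
Proof.
move=> hUS; rewrite wedgeE hUS eqxx; case: eqP => [<-|neq].
  have -> : mxs #|U| #|U| (1%:M : 'M[C]_n) (enum U) (enum U) = 1%:M.
    apply/matrixP => i j; rewrite !mxE; congr (_%:R).
    by rewrite (nth_uniq x0) ?enum_uniq -?cardE.
  by rewrite det1.
have [u uU uS] : exists2 u, u \in U & u \notin S.
  apply/exists_inP; rewrite -negb_forall_in; apply/negP => /forall_inP H.
  apply: neq; apply/eqP; rewrite eqEcard hUS leqnn andbT.
  by apply/subsetP => x /H.
have hi : (index u (enum U) < #|S|)%N by rewrite -hUS index_lt.
apply: (det_zero_row (i := Ordinal hi)) => j; rewrite !mxE /= nth_index ?mem_enum //.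
case: eqP => // E; move: uS; rewrite E -mem_enum mem_nth // -cardE //.
Qed.

Lemma det_R k (A : 'M[C]_k) p q : (q < p)%N -> (p <= k)%N ->
  (forall i j : 'I_k, (i < p)%N -> (q <= j)%N -> A i j = 0) -> \det A = 0.
Proof.
move=> hqp hpk H; apply/eqP; apply: contraT => hd.
have Au : A \in unitmx by rewrite unitmxE unitfE.
have E : (pid_mx p : 'M[C]_k) *m A = pid_mx p *m A *m pid_mx q.
  apply/matrixP => i j.
  have E1 : forall j, (pid_mx p *m A) i j = (i < p)%:R * A i j.
    move=> j'; rewrite mxE (bigD1 i) //= big1 ?addr0; last first.
      move=> l hl; rewrite mxE; case: (i =P l :> nat) => [/val_inj E|_] /=.
        by rewrite E eqxx in hl.
      by rewrite mul0r.
    by rewrite mxE eqxx.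
  rewrite E1 [RHS]mxE (bigD1 j) //= big1 ?addr0; last first.
    move=> l hl; rewrite [pid_mx q l j]mxE; case: (l =P j :> nat) => [/val_inj E|_] /=.
      by rewrite E eqxx in hl.
    by rewrite mulr0.
  rewrite E1 mxE eqxx /=; case: (ltnP i p) => hi; last by rewrite !mul0r.
  case: (ltnP j q) => hj; first by rewrite mulr1.
  by rewrite H // mulr0 mul0r.
have : (\rank ((pid_mx p : 'M[C]_k) *m A *m (pid_mx q : 'M[C]_k)) <= q)%N.
  by apply: (leq_trans (mxrankM_maxr _ _)); rewrite rank_pid_mx // ltnW // (leq_trans hqp).
rewrite -E mxrankMfree ?row_free_unit // rank_pid_mx //.
by rewrite leqNgt hqp.
Qed.

Lemma det_R' k (A : 'M[C]_k) p q : (q < p)%N -> (p <= k)%N ->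
  (forall i j : 'I_k, (j < p)%N -> (q <= i)%N -> A i j = 0) -> \det A = 0.
Proof.
move=> hqp hpk H; rewrite -det_tr (det_R hqp hpk) // => i j hi hj.
by rewrite mxE H.
Qed.

Lemma sorted_enum_ord : sorted (fun x y : 'I_n => (x < y)%N) (enum 'I_n).
Proof. by have := iota_ltn_sorted 0 n; rewrite -val_enum_ord sorted_map. Qed.

Lemma filter_split (s : seq 'I_n) (P : pred 'I_n) p :
  sorted (fun x y : 'I_n => (x < y)%N) s ->
  filter P s = filter (fun x => P x && (x < p)%N) s ++ filter (fun x => P x && (p <= x)%N) s.
Proof.
elim: s => //= x s IH hs.
have hs' := path_sorted hs.
have hall : all (fun y : 'I_n => (x < y)%N) s.
  by apply: order_path_min hs => u v w; apply: ltn_trans.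
rewrite IH //; case: (leqP p x) => hx; last first.
  by rewrite andbT andbF; case: (P x).
rewrite andbF andbT /=.
rewrite (@eq_in_filter _ _ pred0) ?filter_pred0 //=.
move=> y /(allP hall) hy /=; rewrite ltnNge (leq_trans hx) ?andbF // ltnW //.
Qed.

Definition lowS p := [set i : 'I_n | (i < p)%N].
Definition highS p := [set i : 'I_n | (p <= i)%N].

Lemma enum_filter (T : {set 'I_n}) : enum T = filter (mem T) (enum 'I_n).
Proof. by rewrite enumT. Qed.

Lemma enum_split (T : {set 'I_n}) p :
  enum T = enum (T :&: lowS p) ++ enum (T :&: highS p).
Proof.
rewrite !enum_filter (filter_split _ p sorted_enum_ord).
by congr (_ ++ _); apply: eq_filter => x; rewrite !inE.
Qed.

Lemma card_split (T : {set 'I_n}) p : #|T| = (#|T :&: lowS p| + #|T :&: highS p|)%N.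
Proof. by rewrite !cardE {1}(enum_split T p) size_cat. Qed.

Lemma nth_enum_in (A : {set 'I_n}) i : (i < #|A|)%N -> nth x0 (enum A) i \in A.
Proof. exact: ev_mem. Qed.

Lemma det_ublock' p q k (M : 'M[C]_n) s1 s2 t1 t2 : k = (p + q)%N ->
  size s1 = p -> size t1 = p ->
  (forall i j, (i < q)%N -> (j < p)%N -> M (nth x0 s2 i) (nth x0 t1 j) = 0) ->
  \det (mxs k k M (s1 ++ s2) (t1 ++ t2)) =
    \det (mxs p p M s1 t1) * \det (mxs q q M s2 t2).
Proof.
move=> -> hs ht H.
rewrite -(det_ublock (mxs p p M s1 t1) (mxs p q M s1 t2)); congr (\det _).
apply/matrixP => i j.
rewrite -(splitK i) -(splitK j); case: (split i) => i'; case: (split j) => j' /=;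
  rewrite ?block_mxEul ?block_mxEur ?block_mxEdl ?block_mxEdr !mxE /= !nth_cat
          ?hs ?ht ?ltn_ord ?(ltnNge (p + _)) ?leq_addr ?addKn //=.
by rewrite H.
Qed.

Lemma det_lblock' p q k (M : 'M[C]_n) s1 s2 t1 t2 : k = (p + q)%N ->
  size s1 = p -> size t1 = p ->
  (forall i j, (i < p)%N -> (j < q)%N -> M (nth x0 s1 i) (nth x0 t2 j) = 0) ->
  \det (mxs k k M (s1 ++ s2) (t1 ++ t2)) =
    \det (mxs p p M s1 t1) * \det (mxs q q M s2 t2).
Proof.
move=> -> hs ht H.
rewrite -(det_lblock (mxs p p M s1 t1) (mxs q p M s2 t1)); congr (\det _).
apply/matrixP => i j.
rewrite -(splitK i) -(splitK j); case: (split i) => i'; case: (split j) => j' /=;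
  rewrite ?block_mxEul ?block_mxEur ?block_mxEdl ?block_mxEdr !mxE /= !nth_cat
          ?hs ?ht ?ltn_ord ?(ltnNge (p + _)) ?leq_addr ?addKn //=.
by rewrite H.
Qed.

Lemma wedge_ublock (M : 'M[C]_n) (T S : {set 'I_n}) p :
  #|T :&: lowS p| = #|S :&: lowS p| -> #|T| = #|S| ->
  (forall x y, x \in T -> (p <= x)%N -> y \in S -> (y < p)%N -> M x y = 0) ->
  wedge_rows M T S = wedge_rows M (T :&: lowS p) (S :&: lowS p) *
                     wedge_rows M (T :&: highS p) (S :&: highS p).
Proof.
move=> h1 hTS H.
have h2 : #|T :&: highS p| = #|S :&: highS p|.
  by apply/eqP; rewrite -(eqn_add2l #|S :&: lowS p|) -card_split -h1 -card_split hTS.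
rewrite !wedgeE h1 h2 hTS !eqxx (enum_split T p) (enum_split S p).
apply: det_ublock'; rewrite -?cardE //; first exact: card_split.
move=> i j hi hj; apply: H.
- by have := nth_enum_in (A := T :&: highS p) (i := i); rewrite inE h2 => /(_ hi) /andP[].
- by have := nth_enum_in (A := T :&: highS p) (i := i); rewrite !inE h2 => /(_ hi) /andP[].
- by have := nth_enum_in (A := S :&: lowS p) (i := j); rewrite inE => /(_ hj) /andP[].
- by have := nth_enum_in (A := S :&: lowS p) (i := j); rewrite !inE => /(_ hj) /andP[].
Qed.

Lemma wedge_lblock (M : 'M[C]_n) (T S : {set 'I_n}) p :
  #|T :&: lowS p| = #|S :&: lowS p| -> #|T| = #|S| ->
  (forall x y, x \in T -> (x < p)%N -> y \in S -> (p <= y)%N -> M x y = 0) ->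
  wedge_rows M T S = wedge_rows M (T :&: lowS p) (S :&: lowS p) *
                     wedge_rows M (T :&: highS p) (S :&: highS p).
Proof.
move=> h1 hTS H.
have h2 : #|T :&: highS p| = #|S :&: highS p|.
  by apply/eqP; rewrite -(eqn_add2l #|S :&: lowS p|) -card_split -h1 -card_split hTS.
rewrite !wedgeE h1 h2 hTS !eqxx (enum_split T p) (enum_split S p).
apply: det_lblock'; rewrite -?cardE //; first exact: card_split.
move=> i j hi hj; apply: H.
- by have := nth_enum_in (A := T :&: lowS p) (i := i); rewrite inE h1 => /(_ hi) /andP[].
- by have := nth_enum_in (A := T :&: lowS p) (i := i); rewrite !inE h1 => /(_ hi) /andP[].
- by have := nth_enum_in (A := S :&: highS p) (i := j); rewrite inE => /(_ hj) /andP[].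
- by have := nth_enum_in (A := S :&: highS p) (i := j); rewrite !inE => /(_ hj) /andP[].
Qed.

Lemma wedge_ext (M M' : 'M[C]_n) (T S : {set 'I_n}) :
  (forall x y, x \in T -> y \in S -> M x y = M' x y) ->
  wedge_rows M T S = wedge_rows M' T S.
Proof.
move=> H; rewrite !wedgeE; case: eqP => // hST; congr (\det _).
apply/matrixP => i j; rewrite !mxE H //; apply: nth_enum_in => //.
by rewrite hST.
Qed.

Lemma wedge_zero_row (M : 'M[C]_n) (T S : {set 'I_n}) x :
  x \in T -> (forall y, y \in S -> M x y = 0) -> wedge_rows M T S = 0.
Proof.
move=> xT H; rewrite wedgeE; case: eqP => // hST.
apply: (det_zero_row (i := Ordinal (index_lt xT))) => j; rewrite mxE /=.
by rewrite nth_index ?mem_enum // H // nth_enum_in // hST.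
Qed.

Lemma wedge_zero_col (M : 'M[C]_n) (T S : {set 'I_n}) y :
  y \in S -> (forall x, x \in T -> M x y = 0) -> wedge_rows M T S = 0.
Proof.
move=> yS H; rewrite wedgeE; case: eqP => // hST.
have hy : (index y (enum S) < #|T|)%N by rewrite -hST index_lt.
apply: (det_zero_col (j := Ordinal hy)) => i; rewrite mxE /=.
by rewrite nth_index ?mem_enum // H // nth_enum_in.
Qed.

Lemma wedge_R (M : 'M[C]_n) (T S : {set 'I_n}) p :
  (#|S :&: lowS p| < #|T :&: lowS p|)%N ->
  (forall x y, x \in T -> (x < p)%N -> y \in S -> (p <= y)%N -> M x y = 0) ->
  wedge_rows M T S = 0.
Proof.
move=> hlt H; rewrite wedgeE; case: eqP => // hST.
rewrite (enum_split T p) (enum_split S p).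
apply: (det_R hlt); first by rewrite (card_split T p) leq_addr.
move=> i j hi hj; rewrite mxE !nth_cat -!cardE hi ltnNge hj /=.
have hj' : (j - #|S :&: lowS p| < #|S :&: highS p|)%N.
  have hj0 : (j < #|S|)%N by rewrite hST ltn_ord.
  by rewrite ltn_subLR // -card_split.
have := nth_enum_in hi; have := nth_enum_in hj'; rewrite !inE => /andP[h1 h2] /andP[h3 h4].
exact: H.
Qed.

Lemma wedge_R' (M : 'M[C]_n) (T S : {set 'I_n}) p :
  (#|T :&: lowS p| < #|S :&: lowS p|)%N ->
  (forall x y, x \in T -> (p <= x)%N -> y \in S -> (y < p)%N -> M x y = 0) ->
  wedge_rows M T S = 0.
Proof.
move=> hlt H; rewrite wedgeE; case: eqP => // hST.
rewrite (enum_split T p) (enum_split S p).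
apply: (det_R' hlt); first by rewrite -hST (card_split S p) leq_addr.
move=> i j hj hi; rewrite mxE !nth_cat -!cardE hj ltnNge hi /=.
have hi' : (i - #|T :&: lowS p| < #|T :&: highS p|)%N.
  by rewrite ltn_subLR // -card_split.
have := nth_enum_in hi'; have := nth_enum_in hj; rewrite !inE => /andP[h1 h2] /andP[h3 h4].
exact: H.
Qed.

Lemma split_lshift k (j : 'I_n) : split (lshift k j) = inl j.
Proof. exact: (unsplitK (inl _ j)). Qed.
Lemma split_rshift k (j : 'I_n) : split (rshift k j) = inr j.
Proof. exact: (unsplitK (inr _ j)). Qed.

Lemma canonEl lo hi (l j : 'I_n) :
  canon_rel C n lo hi l (lshift n j) = ((lo <= l)%N && (l == j))%:R.
Proof.
rewrite mxE row_mxEl; case: ifP => h /=; last by rewrite mxE.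
by rewrite mxE eq_sym.
Qed.

Lemma canonEr lo hi (l j : 'I_n) :
  canon_rel C n lo hi l (rshift n j) = ((l < hi)%N && (l == j))%:R.
Proof.
rewrite mxE row_mxEr; case: ifP => h /=; last by rewrite mxE.
by rewrite mxE eq_sym.
Qed.

Lemma relEl a b (B B' : 'M[C]_n) (i j : 'I_n) :
  rel_of_bases a b B B' i (lshift n j) = if (a <= i)%N then B i j else 0.
Proof. by rewrite mxE row_mxEl; case: ifP => h; rewrite mxE. Qed.

Lemma relEr a b (B B' : 'M[C]_n) (i j : 'I_n) :
  rel_of_bases a b B B' i (rshift n j) = if (i < a + b)%N then B' i j else 0.
Proof. by rewrite mxE row_mxEr; case: ifP => h; rewrite mxE. Qed.

Lemma canon_rows (a b lo hi : nat) (B B' : 'M[C]_n) :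
  (rel_of_bases a b B B' <= canon_rel C n lo hi)%MS ->
  forall i : 'I_n, exists x : 'I_n -> C,
    (forall j : 'I_n, (if (a <= i)%N then B i j else 0) = x j * (lo <= j)%:R) /\
    (forall j : 'I_n, (if (i < a + b)%N then B' i j else 0) = x j * (j < hi)%:R).
Proof.
move=> sub i.
have /submxP [D hD] : (row i (rel_of_bases a b B B') <= canon_rel C n lo hi)%MS.
  exact: submx_trans (row_sub _ _) sub.
exists (fun j => D 0 j); split => j.
- have := congr1 (fun M : 'M[C]_(1, n + n) => M 0 (lshift n j)) hD.
  rewrite /= mxE relEl mxE => ->; rewrite (bigD1 j) //= big1 ?addr0.
    by rewrite canonEl eqxx andbT.
  by move=> l hl; rewrite canonEl (negbTE hl) andbF mulr0.
- have := congr1 (fun M : 'M[C]_(1, n + n) => M 0 (rshift n j)) hD.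
  rewrite /= mxE relEr mxE => ->; rewrite (bigD1 j) //= big1 ?addr0.
    by rewrite canonEr eqxx andbT.
  by move=> l hl; rewrite canonEr (negbTE hl) andbF mulr0.
Qed.

Definition good lo hi (T : {set 'I_n}) : bool :=
  [forall i : 'I_n, ((i < lo)%N ==> (i \in T)) && ((i \in T) ==> (i < hi)%N)].

Lemma card_lowS p : (p <= n)%N -> #|lowS p| = p.
Proof.
move=> hp.
have -> : lowS p = [set widen_ord hp i | i : 'I_p].
  apply/setP => x; rewrite inE; apply/idP/imsetP.
    by move=> hx; exists (Ordinal hx) => //; apply: val_inj.
  by case=> i _ ->; rewrite /= ltn_ord.
by rewrite card_imset ?card_ord // => i j /(congr1 val) /= E; apply: val_inj.
Qed.

Lemma good_low lo hi (T : {set 'I_n}) : good lo hi T -> T :&: lowS lo = lowS lo.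
Proof.
move=> /forallP g; apply/setP => x; rewrite !inE; case hx: (x < lo)%N; rewrite ?andbF ?andbT //.
by have /andP[/implyP H _] := g x; apply: H.
Qed.

Lemma good_high lo hi (T : {set 'I_n}) x : good lo hi T -> x \in T -> (x < hi)%N.
Proof. by move=> /forallP g xT; have /andP[_ /implyP ->] := g x. Qed.

Lemma notgood lo hi (T : {set 'I_n}) : ~~ good lo hi T ->
  (#|T :&: lowS lo| < #|lowS lo|)%N \/ exists2 x, x \in T & (hi <= x)%N.
Proof.
case/forallPn => i; rewrite negb_and => /orP [h|h].
  left; apply: proper_card; rewrite properE subsetIr /=.
  move: h; rewrite negb_imply => /andP[h1 h2].
  apply/subsetPn; exists i; rewrite !inE ?h1 //= ?andbT //.
right; move: h; rewrite negb_imply => /andP[h1 h2]; exists i => //.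
by rewrite leqNgt.
Qed.

Lemma wedge_full (M : 'M[C]_n) : wedge_rows M [set: 'I_n] [set: 'I_n] = \det M.
Proof.
rewrite wedgeE eqxx cardsT card_ord; congr (\det _); apply/matrixP => i j.
rewrite mxE enum_setT -enumT.
have E : forall k : 'I_n, nth x0 (enum 'I_n) k = k.
  by move=> k; apply: val_inj; rewrite /= nth_enum_ord.
by rewrite !E.
Qed.

Lemma lambda_canon lo hi (L : extop C n) : (lo <= hi)%N -> (hi <= n)%N ->
  is_lambda (canon_rel C n lo hi) L ->
  exists kap : C, forall S U, L S U = kap * ((S == U) && good lo hi S)%:R.
Proof.
move=> hlh hhn [a [b [c [B [B' [habc Bu B'u /andP[_ sub] HL]]]]]].
have F1 : forall i j : 'I_n, (a <= i)%N -> (j < lo)%N -> B i j = 0.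
  move=> i j hI hJ; have [x [h1 h2]] := canon_rows sub i.
  by move: (h1 j); rewrite hI (leqNgt lo j) hJ /= mulr0.
have F2 : forall i j : 'I_n, (a + b <= i)%N -> (j < hi)%N -> B i j = 0.
  move=> i j hI hJ; have [x [h1 h2]] := canon_rows sub i.
  have hx : x j = 0 by move: (h2 j); rewrite ltnNge hI /= hJ mulr1 => <-.
  by move: (h1 j); rewrite (leq_trans (leq_addr b a) hI) hx mul0r.
have F3 : forall i j : 'I_n, (i < a)%N -> (lo <= j)%N -> B' i j = 0.
  move=> i j hI hJ; have [x [h1 h2]] := canon_rows sub i.
  have hx : x j = 0 by move: (h1 j); rewrite leqNgt hI /= hJ mulr1 => <-.
  by move: (h2 j); rewrite (ltn_addr b hI) hx mul0r.
have F4 : forall i j : 'I_n, (i < a + b)%N -> (hi <= j)%N -> B' i j = 0.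
  move=> i j hI hJ; have [x [h1 h2]] := canon_rows sub i.
  by move: (h2 j); rewrite hI ltnNge hJ /= mulr0.
have F5 : forall i j : 'I_n, (a <= i)%N -> (i < a + b)%N -> (lo <= j)%N -> (j < hi)%N ->
    B i j = B' i j.
  move=> i j hI1 hI2 hJ1 hJ2; have [x [h1 h2]] := canon_rows sub i.
  by move: (h1 j) (h2 j); rewrite hI1 hI2 hJ1 hJ2 => -> ->.
have dB : \det B != 0 by rewrite -unitfE -unitmxE.
have dB' : \det B' != 0 by rewrite -unitfE -unitmxE.
have han : (a <= n)%N by rewrite -habc -addnA leq_addr.
have habn : (a + b <= n)%N by rewrite -habc leq_addr.
have ha1 : (a <= lo)%N.
  rewrite leqNgt; apply/negP => hlt; move/eqP: dB'; apply.
  by apply: (det_R hlt han) => i j hI hJ; apply: F3.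
have ha2 : (lo <= a)%N.
  rewrite leqNgt; apply/negP => hlt; move/eqP: dB; apply.
  by apply: (det_R' hlt (leq_trans hlh hhn)) => i j hJ hI; apply: F1.
have hb1 : (a + b <= hi)%N.
  rewrite leqNgt; apply/negP => hlt; move/eqP: dB'; apply.
  by apply: (det_R hlt habn) => i j hI hJ; apply: F4.
have hb2 : (hi <= a + b)%N.
  rewrite leqNgt; apply/negP => hlt; move/eqP: dB; apply.
  by apply: (det_R' hlt hhn) => i j hJ hI; apply: F2.
have ea : lo = a by apply/eqP; rewrite eqn_leq ha1 ha2.
have eb : hi = (a + b)%N by apply/eqP; rewrite eqn_leq hb1 hb2.
subst lo hi.
have ca : #|lowS a| = a := card_lowS han.
pose X := wedge_rows B (lowS a) (lowS a).
pose Fv := wedge_rows B' (lowS a) (lowS a).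
have X0 : X != 0.
  move: dB; rewrite -wedge_full (wedge_ublock (p := a)) //; last first.
    by move=> x y _ hx _ hy; apply: F1.
  by rewrite !setTI -/X; apply: contra => /eqP ->; rewrite mul0r.
pose kap := Fv / X.
have KI : forall T S : {set 'I_n},
    (if good a (a + b) T then wedge_rows B' T S else 0) =
    kap * (if good a (a + b) S then wedge_rows B T S else 0).
  move=> T S.
  case: (boolP (#|S| == #|T|)) => hST; last first.
    by rewrite !wedgeE (negbTE hST); case: ifP; case: ifP; rewrite ?mulr0.
  move/eqP: hST => hST.
  case gT: (good a (a + b) T); case gS: (good a (a + b) S).
  - have eT := good_low gT; have eS := good_low gS.
    rewrite (wedge_lblock (p := a)) ?eT ?eS //; last first.
      by move=> x y _ hx _ hy; apply: F3.
    rewrite [wedge_rows B T S](wedge_ublock (p := a)) ?eT ?eS //; last first.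
      by move=> x y _ hx _ hy; apply: F1.
    rewrite (wedge_ext (M := B') (M' := B) (T := T :&: highS a) (S := S :&: highS a)); last first.
      move=> x y /setIP[xT hx] /setIP[yS hy]; rewrite inE in hx; rewrite inE in hy.
      symmetry; apply: F5 => //.
        exact: good_high gT xT.
      exact: good_high gS yS.
    by rewrite /kap /Fv /X mulrA divfK.
  - rewrite mulr0; case: (notgood (negbT gS)) => [hlt | [y yS hy]].
      apply: (wedge_R (p := a)); first by rewrite (good_low gT).
      by move=> x y _ hx _ hy; apply: F3.
    apply: (wedge_zero_col yS) => x xT; apply: F4 => //.
    exact: good_high gT xT.
  - case: (notgood (negbT gT)) => [hlt | [x xT hx]].
      rewrite (wedge_R' (p := a)) ?mulr0 //; first by rewrite (good_low gS).
      by move=> x y _ hx _ hy; apply: F1.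
    rewrite (wedge_zero_row xT) ?mulr0 // => y yS; apply: F2 => //.
    exact: good_high gS yS.
  - by rewrite mulr0.
pose N := invmx B.
have NB : N *m B = 1%:M by rewrite mulVmx.
have delta : forall U T : {set 'I_n},
    (T == U)%:R = \sum_V wedge_rows N U V * wedge_rows B V T.
  move=> U T; case: (boolP (#|U| == #|T|)) => h.
    by rewrite minorCB ?(eqP h) // NB minor1 ?(eqP h) // eq_sym.
  rewrite big1; last first.
    move=> V _; rewrite !wedgeE; case: eqP => h1; case: eqP => h2; rewrite ?mulr0 ?mul0r //.
    by move: h; rewrite -h1 h2 eqxx.
  by case: eqP => // E; move: h; rewrite E eqxx.
exists kap => S U.
transitivity (\sum_T L S T * (T == U)%:R).
  rewrite (bigD1 U) //= eqxx mulr1 big1 ?addr0 // => T hT.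
  by rewrite (negbTE hT) mulr0.
transitivity (\sum_V wedge_rows N U V * apply_op L (wedge_rows B V) S).
  rewrite (eq_bigr (fun T => \sum_V L S T * (wedge_rows N U V * wedge_rows B V T))); last first.
    by move=> T _; rewrite delta big_distrr.
  rewrite exchange_big /=; apply: eq_bigr => V _; rewrite /apply_op big_distrr.
  by apply: eq_bigr => T _; rewrite mulrCA.
transitivity (\sum_V wedge_rows N U V *
                 (kap * (if good a (a + b) S then wedge_rows B V S else 0))).
  by apply: eq_bigr => V _; rewrite HL -KI /good; case: ifP.
case gS: (good a (a + b) S) => /=.
  rewrite andbT (delta U S) big_distrr; apply: eq_bigr => V _.
  by rewrite mulrCA.
by rewrite andbF mulr0 big1 // => V _; rewrite !mulr0.
Qed.

End CB.

Lemma sumn_take_mono (s : seq nat) i j : (i <= j)%N -> (sumn (take i s) <= sumn (take j s))%N.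
Proof. by move/subnKC => <-; rewrite takeD sumn_cat leq_addr. Qed.

Lemma sumn_take_le (s : seq nat) i : (sumn (take i s) <= sumn s)%N.
Proof. by rewrite -{2}(cat_take_drop i s) sumn_cat leq_addr. Qed.

Section Final.
Variable C : fieldType.
Variable n : nat.

Lemma nth_canon (alpha : seq nat) j : (j < size alpha)%N ->
  nth 0 (canon_hinge C n alpha) j =
  canon_rel C n (sumn (take j alpha)) (sumn (take j.+1 alpha)).
Proof. by move=> hj; rewrite /canon_hinge (nth_map 0%N) ?size_iota // nth_iota. Qed.

Lemma PM (alpha : seq nat) (A : nat -> extop C n) m :
  sumn alpha = n -> nondeg_over (canon_hinge C n alpha) A -> (0 < m)%N -> (m <= n)%N ->
  A m (lowS n m) (lowS n m) != 0 /\ forall S, S != lowS n m -> A m S (lowS n m) = 0.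
Proof.
move=> hsum hnd hm hmn.
have x0 : 'I_n := Ordinal (leq_trans hm hmn).
case: (hnd m hmn) => j [L [hj lamL [S0 [T0 nz]] [c c0 hA]]].
move: hj; rewrite size_map size_iota => hj.
rewrite nth_canon // in lamL.
set lo := sumn (take j alpha) in lamL; set hi := sumn (take j.+1 alpha) in lamL.
have hlh : (lo <= hi)%N by apply: sumn_take_mono.
have hhn : (hi <= n)%N by rewrite -hsum sumn_take_le.
have [kap hL] := lambda_canon x0 hlh hhn lamL.
move: nz; rewrite /restr; case: ifP => [/andP[/eqP cS0 _] | _]; last by rewrite eqxx.
rewrite hL; case gS0: (good lo hi S0); last by rewrite andbF mulr0 eqxx.
rewrite andbT => nz.
have k0 : kap != 0 by apply: contraNneq nz => ->; rewrite mul0r.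
have hlon : (lo <= n)%N := leq_trans hlh hhn.
have hlm : (lo <= m)%N.
  rewrite -cS0 -(card_lowS hlon) -(good_low gS0).
  by apply: subset_leq_card; apply: subsetIl.
have hmh : (m <= hi)%N.
  rewrite -cS0 -(card_lowS hhn); apply: subset_leq_card.
  by apply/subsetP => x xS; rewrite inE (good_high gS0 xS).
have gm : good lo hi (lowS n m).
  apply/forallP => i; rewrite !inE; apply/andP; split; apply/implyP => hi'.
    exact: leq_trans hi' hlm.
  exact: leq_trans hi' hmh.
have cm : #|lowS n m| = m := card_lowS hmn.
split.
  by rewrite hA /restr cm eqxx hL eqxx gm /= mulr1 mulf_neq0.
move=> S hS; rewrite hA /restr; case: ifP => _; last by rewrite mulr0.
by rewrite hL (negbTE hS) /= mulr0 mulr0.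
Qed.

Lemma degs_range (nu : seq nat) x : x \in degs n nu -> (0 < x)%N && (x <= n)%N.
Proof.
rewrite /degs => /flatten_mapP [j]; rewrite mem_iota mem_nseq => /andP[h1 h2] /andP[_ /eqP ->].
by rewrite h1 -ltnS -(add1n n).
Qed.

End Final.

Unset Implicit Arguments.

Theorem lemma2p14 (R : rcfType) (n : nat) (alpha : seq nat) (nu : seq nat)
    (A : nat -> extop R[i] n) :
  all (fun a => 0 < a)%N alpha ->
  sumn alpha = n ->
  signature n nu ->
  nondeg_over (canon_hinge R[i] n alpha) A ->
  exists2 c : R[i], c != 0 &
    forall S, @r_nu R[i] n nu A (@Xi R[i] n nu) S = c * @Xi R[i] n nu S.
Proof.
move=> hpos hsum hsig hnd.
have PMd : forall i : 'I_(size (degs n nu)),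
    A (nth 0%N (degs n nu) i) (lowS n (nth 0%N (degs n nu) i)) (lowS n (nth 0%N (degs n nu) i)) != 0 /\
    forall S, S != lowS n (nth 0%N (degs n nu) i) ->
      A (nth 0%N (degs n nu) i) S (lowS n (nth 0%N (degs n nu) i)) = 0.
  move=> i; have /andP[h1 h2] := degs_range (mem_nth 0%N (ltn_ord i)).
  exact: PM hsum hnd h1 h2.
exists (\prod_(i < size (degs n nu)) A (nth 0%N (degs n nu) i)
          (lowS n (nth 0%N (degs n nu) i)) (lowS n (nth 0%N (degs n nu) i))).
  by apply/prodf_neq0 => i _; case: (PMd i).
move=> S; rewrite /r_nu.
pose T0 := [tuple lowS n (nth 0%N (degs n nu) i) | i < size (degs n nu)].
have XiT0 : @Xi R[i] n nu T0 = 1.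
  by rewrite /Xi; apply: big1 => i _; rewrite tnth_mktuple /xi_deg eqxx.
rewrite (bigD1 T0) //= [X in _ + X]big1 ?addr0; last first.
  move=> T hT.
  have : [exists i, tnth T i != tnth T0 i].
    apply: contraR hT => /existsPn H; apply/eqP/eq_from_tnth => i.
    by apply/eqP; move: (H i); rewrite negbK.
  case/existsP => i hi; rewrite /Xi [X in _ * X](bigD1 i) //= /xi_deg.
  by rewrite tnth_mktuple in hi; rewrite (negbTE hi) mul0r mulr0.
rewrite XiT0 mulr1 /Xi -big_split /=; apply: eq_bigr => i _.
rewrite tnth_mktuple /xi_deg; case: eqP => [->|ne]; first by rewrite mulr1.
by rewrite mulr0; apply: (PMd i).2; apply/eqP.
Qed.
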